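(* Let $\mathbf{A}\in\mathbb{R}^{n\times n}$ be symmetric positive definite, and let $\mathbf{A}_\ell=\mathbf{A}+\sum_{k=1}^{\ell}\mathbf{P}_k\mathbf{E}_k\mathbf{P}_k$, where each $\mathbf{E}_k\in\mathbb{R}^{n\times n}$ is symmetric and each $\mathbf{P}_k$ is an orthogonal projection matrix. Suppose $$\sum_{k=1}^{\ell}\|\mathbf{E}_k\|_2\,\|\mathbf{P}_k\mathbf{A}^{-1}\mathbf{P}_k\|_2\le\mu<1.$$ Then $\mathbf{A}_\ell$ is symmetric positive definite and the condition number satisfies $$\kappa\!\left(\mathbf{A}_\ell^{-1/2}\mathbf{A}\,\mathbf{A}_\ell^{-1/2}\right)\le\frac{1+\mu}{1-\mu}.$$
   Context: For an SPD matrix $\mathbf{X}=\mathbf{V}\mathbf{\Lambda}\mathbf{V}^T$ (eigendecomposition), $\mathbf{X}^{1/2}=\mathbf{V}\mathbf{\Lambda}^{1/2}\mathbf{V}^T$ and $\mathbf{X}^{-1/2}$ is its inverse; $\kappa$ denotes the 2-norm condition number (ratio of largest to smallest eigenvalue for an SPD matrix). *)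

(* Defs.v *)
(* Reals are modelled by an arbitrary real closed field R
   (needed for square roots). *)
From HB Require Import structures.
From mathcomp Require Import all_boot all_order all_algebra.
From Stdlib Require Import ClassicalEpsilon.
Set Implicit Arguments. Unset Strict Implicit. Unset Printing Implicit Defensive.
Import Order.TTheory GRing.Theory Num.Theory.
Local Open Scope ring_scope.

Section Defs.
Variable R : rcfType.
Variable n : nat.

Definition symm_mx (A : 'M[R]_n) : Prop := A^T = A.

Definition spd (A : 'M[R]_n) : Prop :=
  symm_mx A /\ forall x : 'cV[R]_n, x != 0 -> 0 < (x^T *m A *m x) 0 0.

Definition orth_proj (P : 'M[R]_n) : Prop := P^T = P /\ P *m P = P.

Definition vnorm (x : 'cV[R]_n) : R := Num.sqrt (\sum_i (x i 0) ^+ 2).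

Definition is_norm2 (A : 'M[R]_n) (c : R) : Prop :=
  0 <= c /\ (forall x, vnorm (A *m x) <= c * vnorm x) /\
  (forall d, 0 <= d -> (forall x, vnorm (A *m x) <= d * vnorm x) -> c <= d).

Definition norm2 (A : 'M[R]_n) : R := epsilon (inhabits 0) (is_norm2 A).

Definition kappa (A : 'M[R]_n) : R := norm2 A * norm2 (invmx A).

Definition is_sqrtm (X S : 'M[R]_n) : Prop :=
  exists (V : 'M[R]_n) (d : 'rV[R]_n),
    V^T *m V = 1%:M /\ (forall i, 0 <= d 0 i) /\
    X = V *m diag_mx d *m V^T /\
    S = V *m diag_mx (map_mx Num.sqrt d) *m V^T.

Definition sqrtm (X : 'M[R]_n) : 'M[R]_n := epsilon (inhabits 0) (is_sqrtm X).

Definition isqrtm (X : 'M[R]_n) : 'M[R]_n := invmx (sqrtm X).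

End Defs.

(* Main.v *)
Require Import Defs.
From HB Require Import structures.
From mathcomp Require Import all_boot all_order all_algebra.
From mathcomp Require Import ring lra.
From mathcomp Require Import complex.
From Stdlib Require Import ClassicalEpsilon.
Set Implicit Arguments. Unset Strict Implicit. Unset Printing Implicit Defensive.
Import Order.TTheory GRing.Theory Num.Theory.
Local Open Scope ring_scope.

Section Basic.
Variable R : rcfType.

Definition dot m (x y : 'cV[R]_m) : R := (x^T *m y) 0 0.

Lemma dotE m (x y : 'cV[R]_m) : dot x y = \sum_i x i 0 * y i 0.
Proof. by rewrite /dot mxE; apply: eq_bigr => i _; rewrite mxE. Qed.

Lemma dotC m (x y : 'cV[R]_m) : dot x y = dot y x.
Proof. by rewrite !dotE; apply: eq_bigr => i _; rewrite mulrC. Qed.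

Lemma dot_ge0 m (x : 'cV[R]_m) : 0 <= dot x x.
Proof. by rewrite dotE; apply: sumr_ge0 => i _; rewrite -expr2 sqr_ge0. Qed.

Lemma dot_eq0 m (x : 'cV[R]_m) : dot x x = 0 -> x = 0.
Proof.
rewrite dotE => H; apply/matrixP=> i j; rewrite ord1 mxE.
have H' : \sum_i x i 0 ^+ 2 = 0 by rewrite -[RHS]H; apply: eq_bigr => k _; rewrite expr2.
have := @psumr_eq0P _ _ predT (fun k => x k 0 ^+ 2) (fun k _ => sqr_ge0 _) H' i isT.
by move/eqP; rewrite sqrf_eq0 => /eqP.
Qed.

Lemma dotBl m (x y z : 'cV[R]_m) : dot (x - y) z = dot x z - dot y z.
Proof. by rewrite !dotE -sumrB; apply: eq_bigr => i _; rewrite !mxE mulrBl. Qed.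
Lemma dotBr m (x y z : 'cV[R]_m) : dot z (x - y) = dot z x - dot z y.
Proof. by rewrite !dotE -sumrB; apply: eq_bigr => i _; rewrite !mxE mulrBr. Qed.
Lemma dotDl m (x y z : 'cV[R]_m) : dot (x + y) z = dot x z + dot y z.
Proof. by rewrite !dotE -big_split; apply: eq_bigr => i _; rewrite !mxE mulrDl. Qed.
Lemma dotDr m (x y z : 'cV[R]_m) : dot z (x + y) = dot z x + dot z y.
Proof. by rewrite !dotE -big_split; apply: eq_bigr => i _; rewrite !mxE mulrDr. Qed.
Lemma dotZl m a (x z : 'cV[R]_m) : dot (a *: x) z = a * dot x z.
Proof. by rewrite !dotE mulr_sumr; apply: eq_bigr => i _; rewrite !mxE mulrA. Qed.
Lemma dotZr m a (x z : 'cV[R]_m) : dot z (a *: x) = a * dot z x.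
Proof. by rewrite dotC dotZl dotC. Qed.

Lemma tr11 (M : 'M[R]_1) : M^T 0 0 = M 0 0.
Proof. by rewrite mxE. Qed.

Lemma mx11E (M : 'M[R]_1) : M = (M 0 0)%:M.
Proof. exact: mx11_scalar. Qed.

Lemma householder n (u : 'cV[R]_n.+1) : dot u u = 1 ->
  exists Q : 'M[R]_n.+1, Q^T *m Q = 1%:M /\ Q *m delta_mx 0 0 = u.
Proof.
move=> uu.
pose e : 'cV[R]_n.+1 := delta_mx 0 0.
pose w := u - e.
pose c := dot w w.
have ee : dot e e = 1.
  rewrite dotE (bigD1 0) //= big1 ?addr0 ?mxE ?eqxx ?mulr1 //.
  by move=> i /negbTE Hi; rewrite !mxE Hi mul0r.
have ue : dot u e = u 0 0.
  rewrite dotE (bigD1 0) //= big1 ?addr0 ?mxE ?eqxx ?mulr1 //.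
  by move=> i /negbTE Hi; rewrite !mxE Hi mulr0.
have cE : c = 2 - 2 * u 0 0.
  rewrite /c /w dotBl !dotBr uu ee ue dotC ue; ring.
have [c0|cn0] := eqVneq c 0.
  exists 1%:M; rewrite trmx1 mulmx1 mul1mx; split => //.
  by have /eqP := dot_eq0 c0; rewrite subr_eq0 => /eqP.
pose Q := 1%:M - (2 / c) *: (w *m w^T).
have QT : Q^T = Q.
  by rewrite /Q linearB /= trmx1 linearZ /= trmx_mul trmxK.
have ww : w^T *m w = c%:M by rewrite [LHS]mx11E.
exists Q; rewrite QT; split.
  rewrite /Q mulmxBl !mulmxBr !mul1mx !mulmx1 -!scalemxAl -!scalemxAr scalerA.
  rewrite !mulmxA -[w *m w^T *m w](mulmxA) ww mul_mx_scalar -!scalemxAl scalerA.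
  have -> : 2 / c * (2 / c) * c = 2 / c + 2/c by field.
  by rewrite scalerDl opprB addrK subrK.
rewrite /Q mulmxBl mul1mx -scalemxAl -mulmxA.
have -> : w^T *m delta_mx 0 0 = (u 0 0 - 1)%:M.
  rewrite [LHS]mx11E; congr (_%:M).
  by rewrite -[(w^T *m _) 0 0]/(dot w e) /w dotBl ue ee.
rewrite mul_mx_scalar scalerA.
have -> : 2 / c * (u 0 0 - 1) = -1.
  rewrite cE; apply/eqP; rewrite -subr_eq0; apply/eqP; field.
  by move: cn0; rewrite cE.
by rewrite scaleN1r opprK /w -/e addrC subrK.
Qed.

End Basic.

Section Eig.
Variable R : rcfType.

Lemma real_eig n (A : 'M[R]_n.+1) : A^T = A ->
  exists a : R, exists2 v : 'rV[R]_n.+1, v *m A = a *: v & v != 0.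
Proof.
move=> sA.
pose RC := real_complex R.
pose AC := map_mx RC A.
have [z] := @eigenvalue_closed (R[i]) _ AC (ltn0Sn n).
move=> /eigenvalueP [v Hv vn0].
pose w := map_mx (@conjc R) v.
have ACc : map_mx (@conjc R) AC = AC.
  by apply/matrixP=> i j; rewrite !mxE conjc_real.
have Hw : w *m AC = conjc z *: w.
  rewrite -ACc /w -map_mxM Hv; apply/matrixP=> i j; rewrite !mxE rmorphM.
  done.
have ACt : AC^T = AC by rewrite /AC map_trmx sA.
pose t := (v *m w^T) 0 0.
have t_ne0 : t != 0.
  rewrite /t mxE; apply/negP=> /eqP Ht.
  have Hpos : forall i : 'I_n.+1, true -> 0 <= v 0 i * w^T i 0.
    by move=> i _; rewrite !mxE; apply: mulcJ_ge0.
  have H0 := psumr_eq0P Hpos Ht.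
  move/negP: vn0; apply; apply/eqP/rowP=> i; rewrite mxE.
  have := H0 i isT; rewrite !mxE => /eqP; rewrite mulf_eq0 => /orP[/eqP//|].
  by rewrite conjc_eq0 => /eqP.
have E1 : (v *m AC *m w^T) 0 0 = z * t.
  by rewrite Hv -scalemxAl mxE.
have E2 : (v *m AC *m w^T) 0 0 = conjc z * t.
  have tr1 : forall M : 'M[R[i]]_1, M 0 0 = M^T 0 0 by move=> M; rewrite mxE.
  rewrite tr1 !trmx_mul trmxK ACt mulmxA Hw -scalemxAl mxE.
  by rewrite /t tr1 trmx_mul trmxK.
have zr : z = conjc z.
  by apply: (mulIf t_ne0); rewrite -E1 -E2.
have zR : z = RC (complex.Re z).
  have : forall c : R[i], c = conjc c -> c = RC (complex.Re c).
    move=> [a b] /= [] Hb; rewrite /RC /=; congr Complex.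
    by apply/eqP; rewrite -[b == 0](@mulrn_eq0 _ b 2) mulr2n {2}Hb subrr.
  by apply.
exists (complex.Re z); apply/eigenvalueP.
have : root (char_poly AC) z.
  by rewrite -eigenvalue_root_char; apply/eigenvalueP; exists v.
rewrite /AC -map_char_poly {1}zR fmorph_root.
by rewrite -eigenvalue_root_char.
Qed.
End Eig.

Section Spec.
Variable R : rcfType.

Lemma lshift0 m : (lshift m (0 : 'I_1)) = 0 :> 'I_(1 + m).
Proof. by apply: val_inj. Qed.

Lemma rshift_neq0 m (i : 'I_m) : (rshift 1 i == 0 :> 'I_(1 + m)) = false.
Proof. by []. Qed.

Lemma spectral n (A : 'M[R]_n) : A^T = A ->
  exists (V : 'M[R]_n) (d : 'rV[R]_n), V^T *m V = 1%:M /\ A = V *m diag_mx d *m V^T.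
Proof.
elim: n A => [|m IH] A sA.
  exists 1%:M, 0; rewrite trmx1 mulmx1; split => //.
  by apply/matrixP => [[]].
have [a [v Hv vn0]] := real_eig sA.
pose u0 := v^T.
have Au0 : A *m u0 = a *: u0 by rewrite /u0 -{1}sA -trmx_mul Hv linearZ.
have u0n0 : u0 != 0.
  apply: contra vn0 => /eqP H; apply/eqP.
  by rewrite -(trmxK v) -/u0 H trmx0.
pose s := dot u0 u0.
have s_gt0 : 0 < s.
  rewrite lt_def dot_ge0 andbT; apply: contra u0n0 => /eqP H.
  by rewrite (dot_eq0 H).
pose u := (Num.sqrt s)^-1 *: u0.
have uu : dot u u = 1.
  rewrite /u dotZl dotZr -/s mulrA -expr2 exprVn sqr_sqrtr ?ltW // mulVf //.
  by rewrite gt_eqF.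
have Au : A *m u = a *: u by rewrite /u -scalemxAr Au0 !scalerA mulrC.
have [Q [QQ Qe]] := householder uu.
have QQ' : Q *m Q^T = 1%:M by apply: mulmx1C.
pose B := Q^T *m A *m Q.
have sB : B^T = B by rewrite /B !trmx_mul trmxK sA mulmxA.
have Bcol : B *m (delta_mx 0 0 : 'cV_m.+1) = a *: (delta_mx 0 0 : 'cV_m.+1).
  by rewrite /B -!mulmxA Qe Au -scalemxAr -Qe mulmxA QQ mul1mx.
have Bi0 : forall i, B i 0 = a * (i == 0)%:R.
  move=> i; have := congr1 (fun M : 'cV[R]_m.+1 => M i 0) Bcol.
  by rewrite -colE !mxE eqxx andbT.
have AE : A = Q *m B *m Q^T by rewrite /B !mulmxA QQ' mul1mx -mulmxA QQ' mulmx1.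
clearbody B.
pose B' := drsubmx (B : 'M_(1 + m)).
have sB' : B'^T = B' by rewrite /B' trmx_drsub sB.
have [V' [d' [VV' B'E]]] := IH B' sB'.
pose W : 'M[R]_(1 + m) := block_mx 1%:M 0 0 V'.
have BE : (B : 'M_(1 + m)) = block_mx (a%:M) 0 0 B'.
  rewrite -[LHS](submxK (B : 'M_(1 + m))); congr block_mx.
  - apply/matrixP => i j; rewrite !ord1 !mxE lshift0 Bi0 eqxx /= mulr1.
    by [].
  - apply/matrixP => i j; rewrite !mxE -sB mxE !ord1 lshift0 Bi0 rshift_neq0 mulr0.
    by [].
  - by apply/matrixP => i j; rewrite !mxE !ord1 lshift0 Bi0 rshift_neq0 mulr0.
exists (Q *m W), (row_mx (a%:M) d'); split.
  rewrite trmx_mul mulmxA -(mulmxA W^T) QQ mulmx1 /W tr_block_mx !trmx0 trmx1.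
  rewrite (@mulmx_block _ 1 m 1 m 1 m) !mulmx0 !mul0mx !mulmx1 !addr0 !add0r VV'.
  by rewrite -scalar_mx_block.
rewrite AE trmx_mul !mulmxA; congr (_ *m _).
rewrite -!mulmxA; congr (_ *m _).
rewrite BE (@diag_mx_row _ m 1) /W (@tr_block_mx _ 1 m 1 m) !trmx0 trmx1 !(@mulmx_block _ 1 m 1 m 1 m).
rewrite !mulmx0 !mul0mx !mulmx1 !mul1mx !addr0 !add0r B'E mulmxA.
rewrite mulmx0; have -> : diag_mx (a%:M : 'rV[R]_1) = a%:M by apply/matrixP => i j; rewrite !ord1 !mxE eqxx.
by [].
Qed.

End Spec.

Section Norm.
Variable R : rcfType.

Lemma dotTr m (N : 'M[R]_m) x y : dot x (N *m y) = dot (N^T *m x) y.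
Proof. by rewrite /dot trmx_mul trmxK mulmxA. Qed.

Lemma dot_sym m (N : 'M[R]_m) x y : N^T = N -> dot x (N *m y) = dot y (N *m x).
Proof. by move=> sN; rewrite dotTr sN dotC. Qed.

Lemma quad_disc (a b c : R) : 0 <= c ->
  (forall t, 0 <= a + 2 * t * b + t ^+ 2 * c) -> b ^+ 2 <= a * c.
Proof.
move=> c0 H; have [cz|cn0] := eqVneq c 0.
  rewrite cz; move: H; rewrite cz => H.
  have [->|bn0] := eqVneq b 0; first by rewrite expr0n mulr0.
  pose t0 := - (a + 1) / (2 * b).
  have E : a + 2 * t0 * b + t0 ^+ 2 * 0 = -1.
    by rewrite /t0; field; rewrite bn0.
  by have := H t0; rewrite E ler0N1.
have cp : 0 < c by rewrite lt_def cn0.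
pose t0 := - b / c.
have E : a + 2 * t0 * b + t0 ^+ 2 * c = (a * c - b ^+ 2) / c.
  by rewrite /t0; field.
have := H t0; rewrite E => Hq; have := mulr_ge0 Hq (ltW cp); by rewrite divfK ?subr_ge0.
Qed.

Lemma cs_form m (B : 'M[R]_m) x y : B^T = B -> (forall z, 0 <= dot z (B *m z)) ->
  dot x (B *m y) ^+ 2 <= dot x (B *m x) * dot y (B *m y).
Proof.
move=> sB psd; apply: quad_disc => // t.
have := psd (x + t *: y).
rewrite mulmxDr -scalemxAr !dotDl !dotDr !dotZl !dotZr (@dot_sym _ B y x sB).
move=> H; apply: (le_trans H); rewrite le_eqVlt; apply/orP; left; apply/eqP; ring.
Qed.

Lemma cs m (x y : 'cV[R]_m) : dot x y ^+ 2 <= dot x x * dot y y.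
Proof.
have := @cs_form m 1%:M x y (trmx1 _ _) (fun z => ltac:(by rewrite mul1mx dot_ge0)).
by rewrite !mul1mx.
Qed.

Lemma vnormE m (x : 'cV[R]_m) : vnorm x = Num.sqrt (dot x x).
Proof. by rewrite /vnorm dotE; congr Num.sqrt; apply: eq_bigr => i _; rewrite expr2. Qed.

Lemma norm_exists m (M : 'M[R]_m) : exists c, is_norm2 M c.
Proof.
have sMM : (M^T *m M)^T = M^T *m M by rewrite trmx_mul trmxK.
have [V [d [VV ME]]] := spectral sMM.
have VV' : V *m V^T = 1%:M := mulmx1C VV.
pose dm := \big[Num.max/0]_(i < m) d 0 i.
have dm0 : 0 <= dm.
  by apply: (big_rec (fun z => 0 <= z)) => // i z _ Hz; rewrite le_max Hz orbT.
have dmi : forall i, d 0 i <= dm.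
  by move=> i; rewrite /dm (bigD1 i) //= le_max lexx.
have dV : forall (z x : 'cV[R]_m), dot (V *m z) x = dot z (V^T *m x).
  by move=> z w; rewrite dotTr trmxK.
have key : forall x, dot (M *m x) (M *m x) = \sum_i d 0 i * (V^T *m x) i 0 ^+ 2.
  move=> x; rewrite (dotTr M (M *m x) x) mulmxA ME -!mulmxA dV dotC dotE.
  apply: eq_bigr => i _; rewrite mul_diag_mx !mxE expr2; ring.
have dotV : forall x, dot (V^T *m x) (V^T *m x) = dot x x.
  by move=> x; rewrite dotTr trmxK mulmxA VV' mul1mx.
exists (Num.sqrt dm); split; first exact: sqrtr_ge0.
split.
  move=> x; rewrite !vnormE -sqrtrM // ler_wsqrtr //.
  rewrite key -dotV dotE mulr_sumr; apply: ler_sum => i _.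
  by rewrite -expr2; apply: ler_wpM2r; [exact: sqr_ge0 | exact: dmi].
move=> c' c0 Hc.
have : dm = 0 \/ exists i, dm = d 0 i.
  apply: (big_ind (fun z => z = 0 \/ exists i, z = d 0 i)).
  - by left.
  - by move=> u v Hu Hv; rewrite maxEle; case: ifP.
  - by move=> i _; right; exists i.
case=> [->|[i ->]]; first by rewrite sqrtr0.
pose e : 'cV[R]_m := delta_mx i 0.
have := Hc (V *m e).
rewrite !vnormE key dV mulmxA VV mul1mx.
have ee : dot e e = 1.
  rewrite dotE (bigD1 i) //= big1 ?addr0 ?mxE ?eqxx ?mulr1 //.
  by move=> j /negbTE Hj; rewrite !mxE Hj mul0r.
rewrite ee sqrtr1 mulr1 (bigD1 i) //= big1 ?addr0 ?mxE ?eqxx ?expr1n ?mulr1 //.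
by move=> j /negbTE Hj; rewrite !mxE Hj expr0n /= mulr0.
Qed.

Lemma norm2_spec m (M : 'M[R]_m) : is_norm2 M (norm2 M).
Proof. by rewrite /norm2; apply: epsilon_spec; exact: norm_exists. Qed.

Lemma norm2_ge0 m (M : 'M[R]_m) : 0 <= norm2 M.
Proof. by case: (norm2_spec M). Qed.

Lemma norm2_bound m (M : 'M[R]_m) x :
  dot (M *m x) (M *m x) <= norm2 M ^+ 2 * dot x x.
Proof.
case: (norm2_spec M) => n0 [H _]; have := H x; rewrite !vnormE.
have := sqrtr_ge0 (dot (M *m x) (M *m x)).
have := sqr_sqrtr (dot_ge0 (M *m x)); have := sqr_sqrtr (dot_ge0 x).
have := sqrtr_ge0 (dot x x).
set a := Num.sqrt _; set b := Num.sqrt _ => b0 Eb Ea a0 H1.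
rewrite -Ea -Eb; nra.
Qed.

Lemma norm2_le m (N : 'M[R]_m) K : 0 <= K ->
  (forall x, dot (N *m x) (N *m x) <= K ^+ 2 * dot x x) -> norm2 N <= K.
Proof.
move=> K0 H; case: (norm2_spec N) => _ [_ Hl]; apply: Hl => // x.
by rewrite !vnormE -[K]ger0_norm // -sqrtr_sqr -sqrtrM ?sqr_ge0 // ler_wsqrtr.
Qed.

Lemma quad_bound m (E : 'M[R]_m) y : `|dot y (E *m y)| <= norm2 E * dot y y.
Proof.
have h1 := cs y (E *m y); have h2 := norm2_bound E y.
have h3 := dot_ge0 y; have h4 := dot_ge0 (E *m y); have h5 := norm2_ge0 E.
rewrite -ler_sqr ?nnegrE ?mulr_ge0 // real_normK ?num_real //.
apply: (le_trans h1).
rewrite exprMn expr2 [X in _ <= X]mulrC -mulrA; apply: ler_wpM2l => //.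
by rewrite mulrC.
Qed.

Lemma psd_bound m (N : 'M[R]_m) K : N^T = N -> (forall z, 0 <= dot z (N *m z)) ->
  0 <= K -> (forall z, dot z (N *m z) <= K * dot z z) ->
  forall x, dot (N *m x) (N *m x) <= K ^+ 2 * dot x x.
Proof.
move=> sN psd K0 HK x.
have h1 := cs_form x (N *m x) sN psd.
have E1 : dot x (N *m (N *m x)) = dot (N *m x) (N *m x).
  by rewrite dotTr sN.
rewrite E1 in h1.
have h2 := HK x; have h3 := HK (N *m x).
have h4 := psd x; have h5 := psd (N *m x); have h6 := dot_ge0 x.
have h7 := dot_ge0 (N *m x).
set q := dot (N *m x) (N *m x) in h1 h3 h7 *.
set p := dot x (N *m x) in h1 h2 h4.
set r := dot (N *m x) (N *m (N *m x)) in h1 h3 h5.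
set s := dot x x in h2 h6 *.
have h8 : q ^+ 2 <= K ^+ 2 * s * q.
  apply: (le_trans h1).
  have -> : K ^+ 2 * s * q = (K * s) * (K * q) by ring.
  by apply: ler_pM.
have [q0|qn0] := eqVneq q 0; first by rewrite q0 mulr_ge0 ?sqr_ge0.
have qp : 0 < q by rewrite lt_def qn0.
by rewrite -(ler_pM2r qp) -expr2.
Qed.

End Norm.

Section SPD.
Variable R : rcfType.

Lemma spdE m (X : 'M[R]_m) x : (x^T *m X *m x) 0 0 = dot x (X *m x).
Proof. by rewrite /dot mulmxA. Qed.

Lemma spd_decomp m (X : 'M[R]_m) : spd X ->
  exists (V : 'M[R]_m) (d : 'rV[R]_m),
    [/\ V^T *m V = 1%:M, X = V *m diag_mx d *m V^T & forall i, 0 < d 0 i].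
Proof.
move=> [sX pX]; have [V [d [VV XE]]] := spectral sX.
exists V, d; split => // i.
pose e : 'cV[R]_m := delta_mx i 0.
have en0 : V *m e != 0.
  apply/negP => /eqP H.
  have : V^T *m (V *m e) = e by rewrite mulmxA VV mul1mx.
  rewrite H mulmx0 => /matrixP /(_ i 0); rewrite !mxE !eqxx /=.
  by move/eqP; rewrite eq_sym oner_eq0.
have := pX _ en0; rewrite spdE XE -!mulmxA (mulmxA V^T) VV mul1mx.
rewrite dotTr mulmxA VV mul1mx dotE (bigD1 i) //= big1.
  by rewrite mul_diag_mx !mxE !eqxx /= mulr1 mul1r addr0.
by move=> j /negbTE Hj; rewrite !mxE Hj mul0r.
Qed.

Lemma diag1 m : diag_mx (\row_(j < m) (1 : R)) = 1%:M.
Proof. by apply/matrixP => i j; rewrite !mxE. Qed.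

Lemma spd_unit m (X : 'M[R]_m) : spd X -> X \in unitmx.
Proof.
move=> /spd_decomp [V [d [VV XE dp]]].
pose Y := V *m diag_mx (\row_j (d 0 j)^-1) *m V^T.
have : X *m Y = 1%:M.
  rewrite XE /Y -!mulmxA (mulmxA V^T) VV mul1mx (mulmxA (diag_mx d)) mulmx_diag.
  have -> : \row_j (d 0 j * (\row_j0 (d 0 j0)^-1) 0 j) = \row_j (1 : R).
    by apply/rowP => j; rewrite !mxE mulfV // gt_eqF.
  by rewrite diag1 mul1mx (mulmx1C VV).
by case/mulmx1_unit.
Qed.

Lemma sqrtm_props m (X : 'M[R]_m) : spd X ->
  (sqrtm X)^T = sqrtm X /\ sqrtm X *m sqrtm X = X.
Proof.
move=> sX; have [V [d [VV XE dp]]] := spd_decomp sX.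
have ex : exists S, is_sqrtm X S.
  exists (V *m diag_mx (map_mx Num.sqrt d) *m V^T), V, d; split => //.
  by split => // i; apply: ltW.
have := epsilon_spec (inhabits 0) _ ex.
rewrite -/(sqrtm X); move: (sqrtm X) => S [W [e [WW [e0 [XE' SE]]]]].
split; first by rewrite SE !trmx_mul trmxK tr_diag_mx mulmxA.
rewrite SE XE' -!mulmxA (mulmxA W^T) WW mul1mx (mulmxA (diag_mx _)) mulmx_diag.
congr (_ *m (diag_mx _ *m _)); apply/rowP => j; rewrite !mxE -expr2 sqr_sqrtr //.
Qed.

End SPD.

Section Main.
Variable R : rcfType.

Lemma dot_sumr m (I : finType) x (f : I -> 'cV[R]_m) :
  dot x (\sum_k f k) = \sum_k dot x (f k).
Proof.
rewrite dotE; under eq_bigr do rewrite summxE mulr_sumr.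
rewrite exchange_big /=; apply: eq_bigr => k _; by rewrite dotE.
Qed.

Lemma div_bound (s n q : R) : 0 <= s -> 0 <= n -> 0 <= q ->
  s ^+ 2 <= n * s * q -> s <= n * q.
Proof.
move=> s0 n0 q0 H; have [->|sn0] := eqVneq s 0; first by rewrite mulr_ge0.
have sp : 0 < s by rewrite lt_def sn0.
by rewrite -(ler_pM2r sp) -expr2 (le_trans H) // mulrAC.
Qed.

End Main.

Theorem mainTheorem3 (R : rcfType) (n l : nat) (A : 'M[R]_n)
    (E P : 'I_l -> 'M[R]_n) (mu : R) :
  spd A ->
  (forall k, symm_mx (E k)) ->
  (forall k, orth_proj (P k)) ->
  \sum_(k < l) norm2 (E k) * norm2 (P k *m invmx A *m P k) <= mu ->
  mu < 1 ->
  let Al := A + \sum_(k < l) P k *m E k *m P k in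
  spd Al /\ kappa (isqrtm Al *m A *m isqrtm Al) <= (1 + mu) / (1 - mu).
Proof.
move=> spdA sE pP hsum hmu Al.
have [sA pA] := spdA.
have Au := spd_unit spdA.
have psdA : forall z, 0 <= dot z (A *m z).
  move=> z; have [->|zn0] := eqVneq z 0; first by rewrite mulmx0 dotE big1 // => i _; rewrite mxE mul0r.
  by apply: ltW; rewrite -spdE; apply: pA.
pose Ainv := invmx A.
have sAi : Ainv^T = Ainv by rewrite /Ainv trmx_inv sA.
have AAi : A *m Ainv = 1%:M by rewrite /Ainv mulmxV.
have mu0 : 0 <= mu.
  apply: le_trans hsum; apply: sumr_ge0 => k _; apply: mulr_ge0; exact: norm2_ge0.
have projb : forall k x, dot (P k *m x) (P k *m x) <=
    norm2 (P k *m invmx A *m P k) * dot x (A *m x).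
  move=> k x; have [sP PP] := pP k.
  pose y := P k *m x.
  have h1 : dot y y = dot y x by rewrite /y (dotTr (P k) (P k *m x) x) sP mulmxA PP.
  pose u := Ainv *m y.
  have h2 : dot y x = dot u (A *m x) by rewrite dotTr sA mulmxA AAi mul1mx.
  have h3 := cs_form u x sA psdA.
  have h4 : dot u (A *m u) = dot y ((P k *m invmx A *m P k) *m y).
    have Py : P k *m y = y by rewrite /y mulmxA PP.
    rewrite /u (mulmxA A Ainv y) AAi mul1mx -/Ainv -!mulmxA Py [RHS]dotTr sP Py dotC.
    by rewrite dotTr sAi.
  have h5 := ler_norm (dot y ((P k *m invmx A *m P k) *m y)).
  have h6 := quad_bound (P k *m invmx A *m P k) y.
  rewrite -h2 -h1 h4 in h3.
  apply: div_bound; [exact: dot_ge0|exact: norm2_ge0|exact: psdA|].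
  apply: (le_trans h3); apply: ler_wpM2r; first exact: psdA.
  exact: le_trans h5 h6.
have pert : forall x, `|dot x (Al *m x) - dot x (A *m x)| <= mu * dot x (A *m x).
  move=> x; rewrite /Al mulmxDl dotDr addrC addKr mulmx_suml dot_sumr.
  apply: (le_trans (ler_norm_sum _ _ _)).
  apply: (@le_trans _ _ (\sum_k norm2 (E k) * norm2 (P k *m invmx A *m P k) * dot x (A *m x))).
    apply: ler_sum => k _; have [sP PP] := pP k.
    have -> : dot x (P k *m E k *m P k *m x) = dot (P k *m x) (E k *m (P k *m x)).
      by rewrite -!mulmxA dotTr sP.
    apply: (le_trans (quad_bound _ _)); rewrite -mulrA; apply: ler_wpM2l.
      exact: norm2_ge0.
    exact: projb.
  by rewrite -mulr_suml; apply: ler_wpM2r => //; exact: psdA.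
have lo : forall x, (1 - mu) * dot x (A *m x) <= dot x (Al *m x).
  move=> x; have := pert x; rewrite ler_norml => /andP [H _].
  by move: H; lra.
have hi : forall x, dot x (Al *m x) <= (1 + mu) * dot x (A *m x).
  move=> x; have := pert x; rewrite ler_norml => /andP [_ H].
  by move: H; lra.
have sAl : Al^T = Al.
  rewrite /Al linearD /= sA linear_sum /=; congr (_ + _); apply: eq_bigr => k _.
  have [sP _] := pP k.
  by rewrite !trmx_mul sP (sE k) mulmxA.
have spdAl : spd Al.
  split => // x xn0; rewrite spdE; apply: (lt_le_trans _ (lo x)).
  by apply: mulr_gt0; [rewrite subr_gt0 | rewrite -spdE; apply: pA].
split => //.
have [sS SS] := sqrtm_props spdAl.
have Su : sqrtm Al \in unitmx.
  by move: (spd_unit spdAl); rewrite -[X in X \in unitmx]SS unitmx_mul => /andP [].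
rewrite /isqrtm; set S := sqrtm Al in sS SS Su *.
set T := invmx S.
have sT : T^T = T by rewrite /T trmx_inv sS.
have ST : S *m T = 1%:M by rewrite /T mulmxV.
have TS : T *m S = 1%:M by rewrite /T mulVmx.
set N := T *m A *m T.
have sN : N^T = N by rewrite /N !trmx_mul sT sA mulmxA.
have Tu : T \in unitmx by rewrite /T unitmx_inv.
have Nu : N \in unitmx by rewrite /N !unitmx_mul Tu Au.
have qN : forall x, dot x (N *m x) = dot (T *m x) (A *m (T *m x)).
  by move=> x; rewrite /N -!mulmxA [LHS]dotTr sT.
have qI : forall x, dot x x = dot (T *m x) (Al *m (T *m x)).
  move=> x; rewrite -SS -mulmxA dotTr sS.
  by rewrite (mulmxA S T x) ST mul1mx.
have psdN : forall x, 0 <= dot x (N *m x) by move=> x; rewrite qN psdA.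
have mu1 : 0 < 1 - mu by rewrite subr_gt0.
have nN : norm2 N <= (1 - mu)^-1.
  apply: norm2_le; first by rewrite invr_ge0 ltW.
  apply: psd_bound => //; first by rewrite invr_ge0 ltW.
  move=> z; rewrite qN qI ler_pdivlMl //; exact: lo.
set Ni := invmx N.
have sNi : Ni^T = Ni by rewrite /Ni trmx_inv sN.
have NNi : N *m Ni = 1%:M by rewrite /Ni mulmxV.
have qNi : forall x, dot x (Ni *m x) = dot (Ni *m x) (N *m (Ni *m x)).
  by move=> x; rewrite mulmxA NNi mul1mx dotC.
have psdNi : forall x, 0 <= dot x (Ni *m x) by move=> x; rewrite qNi psdN.
have nNi : norm2 Ni <= 1 + mu.
  apply: norm2_le; first lra.
  apply: psd_bound => //; first lra.
  move=> x; rewrite qNi.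
  set u := Ni *m x.
  have xE : x = N *m u by rewrite /u mulmxA NNi mul1mx.
  rewrite [in dot x x]xE.
  apply: div_bound; [exact: psdN | lra | exact: dot_ge0 |].
  apply: (le_trans (cs u (N *m u))); apply: ler_wpM2r; first exact: dot_ge0.
  by rewrite qI (le_trans (hi _)) // -qN.
rewrite /kappa -/N -/Ni.
apply: (le_trans (ler_pM (norm2_ge0 _) (norm2_ge0 _) nN nNi)).
by rewrite mulrC.
Qed.
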